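(* Let $\mathbf A$ be a finite algebra. Then $\mathbf A\in\mathcal K_{\mathrm{poly}}$ if and only if every subalgebra $\mathbf B$ of $\mathbf A$ (including $\mathbf A$) is in $\mathcal K_{\mathrm{surj}}$.
   Context: Algebras are sets with operations interpreting a purely functional signature. For a finite algebra $\mathbf A$, $c_{\mathbf A}(n)$ is the maximum of $|\mathrm{Hom}(\mathbf X,\mathbf A)|$ over algebras $\mathbf X$ in the signature of $\mathbf A$ with at most $n$ elements, and $c^s_{\mathbf A}(n)$ is the maximum number of surjective homomorphisms $\mathbf X\to\mathbf A$ over such $\mathbf X$. $\mathcal K_{\mathrm{poly}}$ is the class of finite algebras $\mathbf A$ with $c_{\mathbf A}(n)\in O(n^k)$ for some $k$; $\mathcal K_{\mathrm{surj}}$ is the class of finite algebras with $c^s_{\mathbf A}(n)\in O(n^k)$ for some $k$. *)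

(* Defs.v *)
(* (+ mathcomp-classical boolp for classical decidability of
   the Prop-valued homomorphism condition, since the signature may be infinite). *)
From HB Require Import structures.
From mathcomp Require Import all_boot.
From mathcomp Require Import boolp.

Set Implicit Arguments.
Unset Strict Implicit.
Unset Printing Implicit Defensive.

Record signature := Signature {
  sym : Type;
  arity : sym -> nat }.

Record algebra (S : signature) := Algebra {
  carrier :> finType;
  op : forall f : sym S, ('I_(arity f) -> carrier) -> carrier }.

Arguments op {S} a f args.

Section Algebras.
Variable S : signature.

Definition is_hom (X A : algebra S) (h : X -> A) : Prop :=
  forall (f : sym S) (args : 'I_(arity f) -> X),
    h (op X f args) = op A f (fun i => h (args i)).

Definition homs (X A : algebra S) : {set {ffun X -> A}} :=
  [set h : {ffun X -> A} | `[< is_hom h >] ].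

Definition shoms (X A : algebra S) : {set {ffun X -> A}} :=
  [set h : {ffun X -> A} | `[< is_hom h >] && [forall a, exists x, h x == a] ].

(* A \in K_poly: c_A(n) \in O(n^k) for some k, where c_A(n) is the max of
   |Hom(X,A)| over algebras X with at most n elements; "c_A(n) <= C n^k"
   is unfolded as "every such X has |Hom(X,A)| <= C n^k". *)
Definition K_poly (A : algebra S) : Prop :=
  exists k C N : nat, forall n : nat, N <= n ->
    forall X : algebra S, #|X| <= n -> #|homs X A| <= C * n ^ k.

Definition K_surj (A : algebra S) : Prop :=
  exists k C N : nat, forall n : nat, N <= n ->
    forall X : algebra S, #|X| <= n -> #|shoms X A| <= C * n ^ k.

Definition is_subuniverse (A : algebra S) (B : {set A}) : Prop :=
  forall (f : sym S) (args : 'I_(arity f) -> A),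
    (forall i, args i \in B) -> op A f args \in B.

Definition subalg (A : algebra S) (B : {set A}) (hB : is_subuniverse B) : algebra S :=
  @Algebra S {x : A | x \in B}
    (fun f args =>
       exist (fun x => x \in B) (op A f (fun i => val (args i)))
             (hB f (fun i => val (args i)) (fun i => valP (args i)))).

End Algebras.

(* Main.v *)
Require Import Defs.
From mathcomp Require Import all_boot.
From mathcomp Require Import boolp.
Set Implicit Arguments.
Unset Strict Implicit.
Unset Printing Implicit Defensive.

Section S.
Variable S : signature.

Definition liftf (A : algebra S) (B : {set A}) (hB : is_subuniverse B) (X : algebra S)
  (g : {ffun X -> subalg hB}) : {ffun X -> A} := [ffun x => val (g x)].

Lemma liftf_inj A B hB X : injective (@liftf A B hB X).
Proof.
move=> g1 g2 E; apply/ffunP => x; apply: val_inj.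
have := congr1 (fun h : {ffun X -> A} => h x) E; rewrite /liftf !ffunE; by [].
Qed.

Lemma liftf_hom (A : algebra S) (B : {set A}) (hB : is_subuniverse B) (X : algebra S) (g : {ffun X -> subalg hB}) : is_hom g -> is_hom (@liftf A B hB X g).
Proof.
move=> Hg f args; rewrite /liftf ffunE Hg /=.
f_equal; apply: funext => i; by rewrite ffunE.
Qed.

Lemma fwd (A : algebra S) : K_poly A -> forall (B : {set A}) (hB : is_subuniverse B), K_surj (subalg hB).
Proof.
case=> k [C [N H]] B hB; exists k, C, N => n Hn X HX.
apply: leq_trans (H n Hn X HX).
rewrite -(card_in_imset (f:=@liftf A B hB X)); last by move=> ? ? _ _; apply: liftf_inj.
apply: subset_leq_card; apply/subsetP => h /imsetP [g Hg ->].
rewrite inE; apply/asboolP; apply: liftf_hom.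
move: Hg; rewrite inE => /andP [/asboolP Hg _]; exact: Hg.
Qed.

Lemma img_sub (X A : algebra S) (h : {ffun X -> A}) :
  is_hom h -> is_subuniverse [set h x | x : X].
Proof.
move=> Hh f args Hargs.
have /choice [xs Hxs] : forall i, exists x, h x = args i.
  move=> i; have /imsetP [x _ ->] := Hargs i; by exists x.
have -> : args = (fun i => h (xs i)) by apply: funext => i; rewrite Hxs.
rewrite -Hh; apply: imset_f; by rewrite inE.
Qed.

Lemma unif (A : algebra S) (H : forall (B : {set A}) (hB : is_subuniverse B), K_surj (subalg hB)) :
  forall s : seq {set A}, exists k C N, forall B, B \in s -> forall hB : is_subuniverse B,
   forall n, N <= n -> forall X : algebra S, #|X| <= n -> #|shoms X (subalg hB)| <= C * n ^ k.
Proof.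
elim=> [|B s [k [C [N IH]]]]; first by exists 0, 0, 0.
case: (pselect (is_subuniverse B)) => [p|np]; last first.
  exists k, C, N => B'; rewrite in_cons => /orP [/eqP -> hB|]; [by case: (np hB)| exact: IH].
case: (H B p) => k1 [C1 [N1 H1]].
exists (maxn k k1), (C + C1), (maxn 1 (maxn N N1)) => B'.
rewrite in_cons => /orP [/eqP -> hB|Bs hB] n Hn X HX.
- rewrite (Prop_irrelevance hB p).
  have n0 : 0 < n by apply: leq_trans Hn; rewrite leq_maxl.
  apply: leq_trans (H1 n _ X HX) _.
    by apply: leq_trans Hn; rewrite (leq_trans _ (leq_maxr _ _)) // leq_maxr.
  apply: leq_mul; first by rewrite leq_addl.
  by apply: leq_pexp2l => //; rewrite leq_maxr.
- have n0 : 0 < n by apply: leq_trans Hn; rewrite leq_maxl.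
  apply: leq_trans (IH B' Bs hB n _ X HX) _.
    by apply: leq_trans Hn; rewrite (leq_trans _ (leq_maxr _ _)) // leq_maxl.
  apply: leq_mul; first by rewrite leq_addr.
  by apply: leq_pexp2l => //; rewrite leq_maxl.
Qed.

End S.

Theorem proposition2p1 (S : signature) (A : algebra S) :
  K_poly A <-> (forall (B : {set A}) (hB : is_subuniverse B), K_surj (subalg hB)).
Proof.
split; first exact: fwd.
move=> H; have [k [C [N U]]] := unif H (enum [set: {set A}]).
exists k, (#|{set A}| * C), N => n Hn X HX.
rewrite -sum1_card (partition_big (fun h : {ffun X -> A} => [set h x | x : X]) predT) //=.
apply: leq_trans (_ : \sum_(B : {set A}) C * n ^ k <= _); last by rewrite sum_nat_const mulnA.
apply: leq_sum => B _; rewrite sum1_card.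
case: (pselect (is_subuniverse B)) => [p|np].
  apply: leq_trans (U B _ p n Hn X HX); last by rewrite mem_enum inE.
  rewrite -(card_in_imset (f:=@liftf S A B p X)); last by move=> ? ? _ _; apply: liftf_inj.
  apply: subset_leq_card; apply/subsetP => h /andP [hH /eqP E].
  have Hh : is_hom h by move: hH; rewrite inE => /asboolP.
  have pf : forall x, h x \in B by move=> x; rewrite -E; apply: imset_f; rewrite inE.
  pose g : {ffun X -> subalg p} := [ffun x => exist (fun y => y \in B) (h x) (pf x)].
  apply/imsetP; exists g; last by apply/ffunP => x; rewrite /liftf !ffunE.
  rewrite inE; apply/andP; split.
    apply/asboolP => f args; apply: val_inj; rewrite /= !ffunE /= Hh.
    f_equal; apply: funext => i; by rewrite ffunE.
  apply/forallP => -[y Hy]; have : y \in [set h x | x : X] by rewrite E.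
  move=> /imsetP [x _ Ex].
  apply/existsP; exists x; apply/eqP; apply: val_inj; by rewrite /= ffunE.
rewrite (@eq_card0 _ (fun h => _ && _)) // => h /=; apply/negP => /andP [hH /eqP E].
apply: np; rewrite -E; apply: img_sub; by move: hH; rewrite inE => /asboolP.
Qed.
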